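(* Let $\delta>0$, $L=3/(4\delta)$ and $\tilde L=(1+\epsilon)L$ with $\epsilon=10^{-6}$. Let data $(\mathbf{x}_i,y_i)$, $i=1,\dots,n$, with $\mathbf{x}_i=(x_{i1},\dots,x_{ip})\in\mathbb{R}^p$, $y_i\in\{-1,1\}$, be standardized so that $\frac1n\sum_i x_{ij}=0$ and $\frac1n\sum_i x_{ij}^2=1$ for every $j$. Fix $\tilde\beta_0,\tilde{\boldsymbol\beta}$, set $r_i=y_i(\tilde\beta_0+\mathbf{x}_i^\top\tilde{\boldsymbol\beta})$, fix $j$, and let $P$ be any real-valued function of $\beta_j$ (the penalty). Define $$F(\beta_j)=\frac1n\sum_{i=1}^n B_\delta\big(r_i+y_ix_{ij}(\beta_j-\tilde\beta_j)\big)+P(\beta_j),$$ $$Q(\beta_j)=\frac{1}{n}\sum_{i=1}^n B_\delta(r_i)+\frac{1}{n}\sum_{i=1}^n B_\delta'(r_i)y_ix_{ij}(\beta_j-\tilde\beta_j)+\frac{\tilde L}{2}(\beta_j-\tilde\beta_j)^2+P(\beta_j).$$ Then $F(\beta_j)=Q(\beta_j)$ if $\beta_j=\tilde\beta_j$, and $F(\beta_j)<Q(\beta_j)$ if $\beta_j\neq\tilde\beta_j$.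
   Context: $B_\delta$ (the BernSVM loss) is defined by $B_\delta(t)=(1-t)_+$ if $|t-1|>\delta$ and $B_\delta(t)=g_\delta(t)=\frac{1}{8\delta^{3}}\{\frac{(1-t+\delta)^{4}}{2}-(1-t-\delta)(1-t+\delta)^{3}\}$ if $|t-1|\le\delta$; it is twice continuously differentiable. *)

(* Defs.v *)
From Stdlib Require Import Reals Lra.
From Coquelicot Require Import Coquelicot.
Open Scope R_scope.

Fixpoint sumR (n : nat) (f : nat -> R) : R :=
  match n with
  | O => 0
  | S m => sumR m f + f m
  end.

Definition g_delta (delta t : R) : R :=
  / (8 * delta ^ 3) *
  ((1 - t + delta) ^ 4 / 2 - (1 - t - delta) * (1 - t + delta) ^ 3).

Definition Bern (delta t : R) : R :=
  if Rle_dec (Rabs (t - 1)) delta then g_delta delta t else Rmax (1 - t) 0.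

Definition Bern' (delta t : R) : R := Derive (Bern delta) t.

Definition eps_L : R := / 1000000.

(* Main.v *)
Require Import Defs.
From Stdlib Require Import Reals Lra Lia FunctionalExtensionality.
From Coquelicot Require Import Coquelicot.
Open Scope R_scope.

Lemma piece (f g h : R->R) a l eta : 0 < eta ->
  (forall t, a - eta < t <= a -> f t = g t) ->
  (forall t, a <= t < a + eta -> f t = h t) ->
  is_derive g a l -> is_derive h a l -> is_derive f a l.
Proof.
  intros He Hg Hh Dg Dh.
  apply is_derive_Reals in Dg. apply is_derive_Reals in Dh.
  apply is_derive_Reals. intros e He'.
  destruct (Dg e He') as [d1 H1]. destruct (Dh e He') as [d2 H2].
  assert (Hd : 0 < Rmin eta (Rmin d1 d2)).
  { apply Rmin_pos; [lra| apply Rmin_pos; apply cond_pos]. }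
  exists (mkposreal _ Hd). simpl. intros hh Hn Ha.
  assert (A1 : Rabs hh < eta) by (eapply Rlt_le_trans; [exact Ha| apply Rmin_l]).
  assert (A2 : Rabs hh < d1) by (eapply Rlt_le_trans; [exact Ha|];
     eapply Rle_trans; [apply Rmin_r| apply Rmin_l]).
  assert (A3 : Rabs hh < d2) by (eapply Rlt_le_trans; [exact Ha|];
     eapply Rle_trans; [apply Rmin_r| apply Rmin_r]).
  apply Rabs_def2 in A1.
  destruct (Rle_lt_dec hh 0).
  - rewrite (Hg (a+hh)) by lra. rewrite (Hg a) by lra. apply H1; auto.
  - rewrite (Hh (a+hh)) by lra. rewrite (Hh a) by lra. apply H2; auto.
Qed.

Lemma three_piece (f f1 f2 f3 df df1 df2 df3 : R->R) a b : a < b ->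
  (forall t, t <= a -> f t = f1 t) -> (forall t, a <= t <= b -> f t = f2 t) ->
  (forall t, b <= t -> f t = f3 t) ->
  (forall t, is_derive f1 t (df1 t)) -> (forall t, is_derive f2 t (df2 t)) ->
  (forall t, is_derive f3 t (df3 t)) ->
  (forall t, t <= a -> df t = df1 t) -> (forall t, a <= t <= b -> df t = df2 t) ->
  (forall t, b <= t -> df t = df3 t) ->
  forall t, is_derive f t (df t).
Proof.
  intros Hab H1 H2 H3 D1 D2 D3 E1 E2 E3 t; simpl in t.
  destruct (Rtotal_order t a) as [Ht|[Ht|Ht]].
  { apply (piece f f1 f1 t (df t) (a - t)).
    lra. intros; apply H1; lra. intros; apply H1; lra.
    rewrite E1 by lra; auto. rewrite E1 by lra; auto. }
  { apply (piece f f1 f2 t (df t) (b - a)).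
    lra. intros; apply H1; lra. intros; apply H2; lra.
    rewrite E1 by lra; auto. rewrite E2 by lra; auto. }
  destruct (Rtotal_order t b) as [Hu|[Hu|Hu]].
  { pose proof (Rmin_l (t-a) (b-t)); pose proof (Rmin_r (t-a) (b-t)).
    apply (piece f f2 f2 t (df t) (Rmin (t - a) (b - t))).
    apply Rmin_pos; lra.
    intros; apply H2; lra. intros; apply H2; lra.
    rewrite E2 by lra; auto. rewrite E2 by lra; auto. }
  { apply (piece f f2 f3 t (df t) (b - a)).
    lra. intros; apply H2; lra. intros; apply H3; lra.
    rewrite E2 by lra; auto. rewrite E3 by lra; auto. }
  { apply (piece f f3 f3 t (df t) (t - b)).
    lra. intros; apply H3; lra. intros; apply H3; lra.
    rewrite E3 by lra; auto. rewrite E3 by lra; auto. }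
Qed.

Lemma taylor_up (f df ddf : R -> R) L x y : x < y ->
  (forall t, is_derive f t (df t)) -> (forall t, is_derive df t (ddf t)) ->
  (forall t, ddf t <= L) ->
  f y <= f x + df x * (y - x) + L / 2 * (y - x) ^ 2.
Proof.
  intros Hxy D1 D2 Hb.
  assert (ED : Derive f = df).
  { apply functional_extensionality; intro t; apply is_derive_unique, D1. }
  destruct (Taylor_Lagrange f 1 x y Hxy) as [z [Hz E]].
  - intros t _ k Hk. destruct k as [|[|[|k]]]; simpl; auto.
    { eexists; apply D1. }
    { apply (ex_derive_ext df). intro s; symmetry; apply is_derive_unique, D1.
      eexists; apply D2. }
    { lia. }
  assert (E1 : Derive_n f 1 x = df x) by (simpl; apply is_derive_unique, D1).
  assert (E2 : Derive_n f 2 z = ddf z).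
  { simpl. rewrite (Derive_ext (fun x0 => Derive (fun x1 => f x1) x0) df).
    apply is_derive_unique, D2. intro s; apply is_derive_unique, D1. }
  rewrite E; simpl sum_f_R0. rewrite E2. simpl in E1. rewrite E1.
  replace (INR (Factorial.fact 2)) with 2 by (simpl; ring).
    pose proof (Hb z). assert (0 <= (y-x)*(y-x)) by nra. nra.
Qed.

Lemma taylor_all (f df ddf : R -> R) L x y :
  (forall t, is_derive f t (df t)) -> (forall t, is_derive df t (ddf t)) ->
  (forall t, ddf t <= L) ->
  f y <= f x + df x * (y - x) + L / 2 * (y - x) ^ 2.
Proof.
  intros D1 D2 Hb.
  destruct (Rtotal_order x y) as [H|[H|H]].
  - eapply taylor_up; eauto.
  - subst. nra.
  - pose proof (taylor_up (fun s => f (- s)) (fun s => - df (- s))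
       (fun s => ddf (- s)) L (- x) (- y)) as T.
    cbv beta in T; rewrite !Ropp_involutive in T. assert (W: -x < -y) by lra.
    specialize (T W).
    assert (R1 : forall t, is_derive (fun s => f (- s)) t (- df (- t))).
    { intro t. replace (- df (- t)) with (scal (-1) (df (-t))).
      apply (is_derive_comp f Ropp t). apply D1.
      auto_derive; auto; ring.
      unfold scal; simpl; unfold mult; simpl; ring. }
    assert (R2 : forall t, is_derive (fun s => - df (- s)) t (ddf (- t))).
    { intro t. replace (ddf (- t)) with (opp (scal (-1) (ddf (-t)))).
      apply (is_derive_opp (fun s => df (- s))).
      apply (is_derive_comp df Ropp t). apply D2.
      auto_derive; auto; ring.
      unfold opp, scal; simpl; unfold mult; simpl; unfold opp; simpl; ring. }
    assert (T' := T R1 R2 (fun t => Hb (- t))).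
    nra.
Qed.

Section S.
Variable delta : R.
Hypothesis Hd : 0 < delta.

Definition D2 t := / (8 * delta ^ 3) * ((1 - t + delta) ^ 2 * (2 * (1 - t) - 4 * delta)).
Definition E2 t := / (8 * delta ^ 3) * (6 * (delta + (1 - t)) * (delta - (1 - t))).
Definition dB t := if Rle_dec (Rabs (t - 1)) delta then D2 t
  else if Rlt_dec t 1 then -1 else 0.
Definition ddB t := if Rle_dec (Rabs (t - 1)) delta then E2 t else 0.

Lemma abs_iff t : Rabs (t - 1) <= delta <-> 1 - delta <= t <= 1 + delta.
Proof. unfold Rabs; destruct Rcase_abs; split; intros; lra. Qed.

Lemma Bern_is_derive t : is_derive (Bern delta) t (dB t).
Proof.
  apply (three_piece (Bern delta) (fun s => 1 - s) (g_delta delta) (fun _ => 0)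
     dB (fun _ => -1) D2 (fun _ => 0) (1 - delta) (1 + delta)).
  - lra.
  - intros s Hs; unfold Bern; destruct Rle_dec as [H|H].
    + apply abs_iff in H. replace s with (1 - delta) by lra.
      unfold g_delta; field; lra.
    + apply Rmax_left; lra.
  - intros s Hs; unfold Bern; destruct Rle_dec as [H|H]; auto.
    exfalso; apply H, abs_iff; lra.
  - intros s Hs; unfold Bern; destruct Rle_dec as [H|H].
    + apply abs_iff in H. replace s with (1 + delta) by lra.
      unfold g_delta; field; lra.
    + apply Rmax_right; lra.
  - intros s; auto_derive; auto; ring.
  - intros s; unfold g_delta, D2; auto_derive; auto. field; lra.
  - intros s; auto_derive; auto.
  - intros s Hs; unfold dB; destruct Rle_dec as [H|H].
    + apply abs_iff in H. replace s with (1 - delta) by lra.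
      unfold D2; field; lra.
    + destruct Rlt_dec; lra.
  - intros s Hs; unfold dB; destruct Rle_dec as [H|H]; auto.
    exfalso; apply H, abs_iff; lra.
  - intros s Hs; unfold dB; destruct Rle_dec as [H|H].
    + apply abs_iff in H. replace s with (1 + delta) by lra.
      unfold D2; field; lra.
    + destruct Rlt_dec; lra.
Qed.

Lemma dB_is_derive t : is_derive dB t (ddB t).
Proof.
  apply (three_piece dB (fun _ => -1) D2 (fun _ => 0)
     ddB (fun _ => 0) E2 (fun _ => 0) (1 - delta) (1 + delta)).
  - lra.
  - intros s Hs; unfold dB; destruct Rle_dec as [H|H].
    + apply abs_iff in H. replace s with (1 - delta) by lra.
      unfold D2; field; lra.
    + destruct Rlt_dec; lra.
  - intros s Hs; unfold dB; destruct Rle_dec as [H|H]; auto.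
    exfalso; apply H, abs_iff; lra.
  - intros s Hs; unfold dB; destruct Rle_dec as [H|H].
    + apply abs_iff in H. replace s with (1 + delta) by lra.
      unfold D2; field; lra.
    + destruct Rlt_dec; lra.
  - intros s; auto_derive; auto.
  - intros s; unfold D2, E2; auto_derive; auto. field; lra.
  - intros s; auto_derive; auto.
  - intros s Hs; unfold ddB; destruct Rle_dec as [H|H]; auto.
    apply abs_iff in H. replace s with (1 - delta) by lra.
    unfold E2; field; lra.
  - intros s Hs; unfold ddB; destruct Rle_dec as [H|H]; auto.
    exfalso; apply H, abs_iff; lra.
  - intros s Hs; unfold ddB; destruct Rle_dec as [H|H]; auto.
    apply abs_iff in H. replace s with (1 + delta) by lra.
    unfold E2; field; lra.
Qed.

Lemma ddB_le t : ddB t <= 3 / (4 * delta).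
Proof.
  assert (0 < 3 / (4 * delta)) by (apply Rdiv_lt_0_compat; lra).
  unfold ddB; destruct Rle_dec; [|lra].
  unfold E2.
  replace (/ (8 * delta ^ 3) * (6 * (delta + (1 - t)) * (delta - (1 - t))))
    with (3 / (4 * delta) - (1 - t) ^ 2 * (6 / (8 * delta ^ 3))) by (field; lra).
  assert (0 <= (1 - t) ^ 2 * (6 / (8 * delta ^ 3))).
  { apply Rmult_le_pos. apply pow2_ge_0. apply Rlt_le, Rdiv_lt_0_compat. lra.
    apply Rmult_lt_0_compat; [lra|]. apply pow_lt; lra. }
  lra.
Qed.

Lemma Bern'_eq t : Bern' delta t = dB t.
Proof. unfold Bern'; apply is_derive_unique, Bern_is_derive. Qed.

Lemma Bern_taylor r h :
  Bern delta (r + h) <= Bern delta r + dB r * h + 3 / (4 * delta) / 2 * h ^ 2.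
Proof.
  pose proof (taylor_all (Bern delta) dB ddB (3 / (4 * delta)) r (r + h)
    Bern_is_derive dB_is_derive ddB_le).
  replace (r + h - r) with h in H by ring. exact H.
Qed.
End S.

Lemma sumR_ext n f g : (forall i, (i < n)%nat -> f i = g i) -> sumR n f = sumR n g.
Proof. induction n; simpl; intros H; auto. rewrite IHn, H; auto. Qed.
Lemma sumR_le n f g : (forall i, (i < n)%nat -> f i <= g i) -> sumR n f <= sumR n g.
Proof. induction n; simpl; intros H. lra. pose proof (H n (Nat.lt_succ_diag_r n)).
  assert (sumR n f <= sumR n g) by (apply IHn; auto). lra. Qed.
Lemma sumR_plus n f g : sumR n (fun i => f i + g i) = sumR n f + sumR n g.
Proof. induction n; simpl. ring. rewrite IHn; ring. Qed.
Lemma sumR_scal n c f : sumR n (fun i => c * f i) = c * sumR n f.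
Proof. induction n; simpl. ring. rewrite IHn; ring. Qed.
Lemma sumR_zero n : sumR n (fun _ => 0) = 0.
Proof. induction n; simpl. ring. rewrite IHn; ring. Qed.

Theorem proposition4
  (delta : R) (n p : nat) (x : nat -> nat -> R) (y : nat -> R)
  (beta0t : R) (betat : nat -> R) (j : nat) (P : R -> R) (bj : R) :
  0 < delta ->
  (0 < n)%nat ->
  (j < p)%nat ->
  (forall i, (i < n)%nat -> y i = 1 \/ y i = -1) ->
  (forall k, (k < p)%nat -> sumR n (fun i => x i k) / INR n = 0) ->
  (forall k, (k < p)%nat -> sumR n (fun i => (x i k) ^ 2) / INR n = 1) ->
  let L := 3 / (4 * delta) in
  let Lt := (1 + eps_L) * L in
  let r := fun i => y i * (beta0t + sumR p (fun k => x i k * betat k)) in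
  let F := fun b =>
    sumR n (fun i => Bern delta (r i + y i * x i j * (b - betat j))) / INR n
    + P b in
  let Q := fun b =>
    sumR n (fun i => Bern delta (r i)) / INR n
    + sumR n (fun i => Bern' delta (r i) * y i * x i j * (b - betat j)) / INR n
    + Lt / 2 * (b - betat j) ^ 2 + P b in
  (bj = betat j -> F bj = Q bj) /\ (bj <> betat j -> F bj < Q bj).
Proof.
  intros Hd Hn Hj Hy _ Hx2 L Lt r F Q.
  assert (HN : 0 < INR n) by (apply lt_0_INR; lia).
  unfold F, Q; clear F Q. split; intro Hb.
  - rewrite Hb. replace (betat j - betat j) with 0 by ring.
    rewrite (sumR_ext n (fun i => Bern' delta (r i) * y i * x i j * 0) (fun _ => 0))
      by (intros; ring).
    rewrite sumR_zero.
    rewrite (sumR_ext n (fun i => Bern delta (r i + y i * x i j * 0))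
       (fun i => Bern delta (r i))) by (intros; f_equal; ring).
    field; lra.
  - set (d := bj - betat j).
    assert (Hd2 : 0 < d ^ 2).
    { assert (d <> 0) by (unfold d; intro; apply Hb; lra).
      simpl. rewrite Rmult_1_r. apply Rsqr_pos_lt; auto. }
    assert (S : sumR n (fun i => Bern delta (r i + y i * x i j * d)) <=
      sumR n (fun i => Bern delta (r i) + Bern' delta (r i) * y i * x i j * d
          + L / 2 * d ^ 2 * (x i j) ^ 2)).
    { apply sumR_le; intros i Hi. rewrite Bern'_eq by auto.
      pose proof (Bern_taylor delta Hd (r i) (y i * x i j * d)) as T.
      assert (y i ^ 2 = 1) by (destruct (Hy i Hi) as [E|E]; rewrite E; ring).
      replace ((y i * x i j * d) ^ 2) with (y i ^ 2 * (x i j ^ 2 * d ^ 2)) in T by ring.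
      rewrite H in T. unfold L. lra. }
    rewrite !sumR_plus, sumR_scal in S.
    assert (X2 : sumR n (fun i => x i j ^ 2) = INR n).
    { pose proof (Hx2 j Hj). apply Rmult_eq_reg_r with (/ INR n).
      rewrite Rinv_r by lra. exact H. apply Rinv_neq_0_compat; lra. }
    rewrite X2 in S.
    assert (HL : 0 < L) by (unfold L; apply Rdiv_lt_0_compat; lra).
    assert (Hdiff : 0 < (Lt - L) / 2 * d ^ 2).
    { unfold Lt, eps_L. apply Rmult_lt_0_compat; auto.
      replace ((1 + / 1000000) * L - L) with (L / 1000000) by field. lra. }
    apply Rmult_le_compat_r with (r := / INR n) in S;
      [| apply Rlt_le, Rinv_0_lt_compat; lra].
    unfold Rdiv at 1. 
    assert (E : (sumR n (fun i => Bern delta (r i)) +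
      sumR n (fun i => Bern' delta (r i) * y i * x i j * d) + L / 2 * d ^ 2 * INR n) * / INR n
      = sumR n (fun i => Bern delta (r i)) / INR n +
      sumR n (fun i => Bern' delta (r i) * y i * x i j * d) / INR n + L / 2 * d ^ 2)
      by (field; lra).
    rewrite E in S. lra.
Qed.
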